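(* Let $R$ be an associative ring with identity, and let $a,b,c,d\in R$ satisfy $bdb=bac$ and $dbd=acd$. If $ac\in R^{d}$, then $bd\in R^{d}$ and $(bd)^{d}=b\big((ac)^{d}\big)^2d$.
   Context: For $x\in R$, $\mathrm{comm}(x)=\{y\in R : xy=yx\}$ and $\mathrm{comm}^2(x)=\{y\in R : yz=zy \text{ for all } z\in\mathrm{comm}(x)\}$. $R^{inv}$ denotes the units of $R$, and $R^{qnil}=\{x\in R : 1+xy\in R^{inv}\text{ for every } y\in \mathrm{comm}(x)\}$. An element $x\in R$ has a generalized Drazin (g-Drazin) inverse if there is $y\in R$ with $y=yxy$, $y\in\mathrm{comm}^2(x)$ and $x-x^2y\in R^{qnil}$; such $y$ is unique and denoted $x^{d}$. $R^{d}$ is the set of elements having a g-Drazin inverse. *)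

(* Defs.v *)
From HB Require Import structures.
From mathcomp Require Import all_boot all_order all_algebra.
Set Implicit Arguments. Unset Strict Implicit. Unset Printing Implicit Defensive.
Import GRing.Theory.
Local Open Scope ring_scope.

(* Associative ring with identity: mathcomp pzRingType (zero ring allowed). *)

Definition commut (R : pzRingType) (x : R) : R -> Prop := fun y => x * y = y * x.

Definition commut2 (R : pzRingType) (x : R) : R -> Prop :=
  fun y => forall z, commut x z -> y * z = z * y.

Definition is_unit (R : pzRingType) (x : R) : Prop :=
  exists y : R, x * y = 1 /\ y * x = 1.

Definition quasinil (R : pzRingType) (x : R) : Prop :=
  forall y, commut x y -> is_unit (1 + x * y).

Definition is_gDrazin_inv (R : pzRingType) (x y : R) : Prop :=
  y = y * x * y /\ commut2 x y /\ quasinil (x - x * x * y).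

Definition has_gDrazin (R : pzRingType) (x : R) : Prop :=
  exists y, is_gDrazin_inv x y.

(* Main.v *)
Require Import Defs.
From HB Require Import structures.
From mathcomp Require Import all_boot all_order all_algebra.
Import GRing.Theory.
Local Open Scope ring_scope.
Lemma jacobson (R : pzRingType) (a b : R) : is_unit (1 + b * a) -> is_unit (1 + a * b).
Proof.
move=> [v [H1 H2]]; exists (1 - a * v * b).
have E1 : a * v * b + a * b * (a * v * b) = a * b.
  have := congr1 (fun t => a * t * b) H1.
  by rewrite /= mulr1 mulrDl mul1r mulrDr mulrDl !mulrA.
have E2 : a * v * b + a * v * b * (a * b) = a * b.
  have := congr1 (fun t => a * t * b) H2.
  by rewrite /= mulr1 mulrDr mulr1 mulrDr mulrDl !mulrA.
split.
- by rewrite mulrBr mulr1 mulrDl mul1r opprD addrA -addrA -opprD E1 addrK.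
- by rewrite mulrBl mul1r mulrDr mulr1 E2 addrK.
Qed.
Lemma unit_lr (R : pzRingType) (a l r : R) : a * r = 1 -> l * a = 1 -> is_unit a.
Proof.
move=> Hr Hl; exists r; split=> //.
have -> : r = l by rewrite -[l]mulr1 -Hr mulrA Hl mul1r.
exact: Hl.
Qed.
Lemma unit_sq (R : pzRingType) (t : R) : is_unit (1 - t * t) -> is_unit (1 + t).
Proof.
move=> [v [H1 H2]]; apply: (@unit_lr _ _ (v * (1 - t)) ((1 - t) * v)).
- by rewrite mulrA mulrDl mul1r mulrBr mulr1 addrA subrK.
- have E : (1 - t) * (1 + t) = 1 - t * t.
    by rewrite mulrBl mul1r mulrDr mulr1 opprD addrA addrK.
  by rewrite -mulrA E.
Qed.
Lemma main (R : pzRingType) (x b d e : R) :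
  b * d * b = b * x -> d * b * d = x * d ->
  is_gDrazin_inv x e -> is_gDrazin_inv (b * d) (b * e ^+ 2 * d).
Proof.
move=> Hb Hd [Hexe [Hc2 Hq]].
have Hb' u : u * b * d * b = u * b * x by rewrite -!mulrA; congr (u * _); rewrite !mulrA.
have Hd' u : u * d * b * d = u * x * d by rewrite -!mulrA; congr (u * _); rewrite !mulrA.
have ex : e * x = x * e by apply: Hc2.
have xdb : x * (d * b) = d * b * x by rewrite mulrA -Hd -!mulrA; congr (d * _); rewrite mulrA Hb.
have edb : e * (d * b) = d * b * e by apply: Hc2.
have edb' u : u * e * d * b = u * d * b * e by rewrite -!mulrA edb !mulrA.
have exe u : u * e * x * e = u * e by rewrite -!mulrA; congr (u * _); rewrite mulrA -Hexe.
have eex u : u * e * e * x = u * e by rewrite -mulrA ex mulrA exe.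
have xeee : x * e * e * e = e * e by rewrite -ex -Hexe.
rewrite expr2; split; last split.
- by rewrite !mulrA Hd' -!edb' Hd' exe eex.
- move=> z; rewrite /commut => Hz.
  have Hz' u : u * b * d * z = u * z * b * d.
    by rewrite -!mulrA; congr (u * _); move: Hz; rewrite -!mulrA.
  have xdzb : x * (d * z * b) = d * z * b * x.
    by rewrite !mulrA -Hd Hz' Hb'.
  have edzb : e * (d * z * b) = d * z * b * e by apply: Hc2.
  have edzb' u : u * e * d * z * b = u * d * z * b * e.
    by rewrite -!mulrA; congr (u * _); move: edzb; rewrite -!mulrA.
  have xeee' u : u * x * e * e * e = u * e * e.
    by rewrite -!mulrA; congr (u * _); move: xeee; rewrite -!mulrA.
  rewrite !mulrA -(eex (b*e)) -(Hd' (b*e*e*e)) Hz' !edzb' Hz !mulrA Hb' xeee'.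
  done.
- have -> : b * d * (b * d) * (b * (e * e) * d) = b * x * e * d.
    by rewrite !mulrA Hb -!edb' Hd' eex.
  have [p Hp] : exists p, p = 1 - x * e by eexists.
  have -> : b * d - b * x * e * d = b * p * d.
    by rewrite Hp mulrBr mulr1 mulrBl !mulrA.
  have Es : x - x * x * e = x * p by rewrite Hp mulrBr mulr1 mulrA.
  rewrite Es in Hq.
  have pp : p * p = p.
    by rewrite {1}Hp mulrBl mul1r Hp mulrBr mulr1 mulrA exe subrr subr0.
  have xp : x * p = p * x.
    by rewrite Hp mulrBr mulrBl mulr1 mul1r -mulrA ex.
  have pdb : p * (d * b) = d * b * p.
    rewrite Hp mulrBl mulrBr mul1r mulr1; congr (_ - _).
    by rewrite -(mulrA x) edb mulrA xdb -mulrA.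
  have pdb' u : u * p * d * b = u * d * b * p.
    by rewrite -!mulrA; congr (u * _); move: pdb; rewrite -!mulrA.
  have pp' u : u * p * p = u * p by rewrite -mulrA pp.
  have sd : x * p * d = d * b * p * d.
    by rewrite -mulrA -pdb !mulrA Hd' xp.
  move=> w; rewrite /commut => Hw.
  apply: unit_sq.
  have -> : 1 - b * p * d * w * (b * p * d * w) = 1 + b * (x * p * d * (- (w * w))).
    rewrite -mulrA (mulrA w) -Hw !mulrA !mulrN !mulrA pdb' Hb pp'.
    done.
  apply: jacobson.
  have -> : x * p * d * (- (w * w)) * b = (x * p) * (d * (- (w * w)) * b) by rewrite !mulrA.
  apply: Hq; rewrite /commut.
  have qN : b * p * d * (- (w * w)) = (- (w * w)) * (b * p * d).
    by rewrite mulrN mulNr; congr (- _); rewrite mulrA Hw -mulrA Hw mulrA.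
  have qN' u : u * b * p * d * (- (w * w)) = u * (- (w * w)) * b * p * d.
    by rewrite -!mulrA; congr (u * _); move: qN; rewrite -!mulrA.
  have qb' u : u * b * p * d * b = u * b * x * p.
    by rewrite pdb' Hb'.
  by rewrite !mulrA sd qN' qb'.
Qed.

Theorem theorem2p2 (R : pzRingType) (a b c d : R) :
  b * d * b = b * a * c -> d * b * d = a * c * d ->
  has_gDrazin (a * c) ->
  has_gDrazin (b * d) /\
  forall e : R, is_gDrazin_inv (a * c) e -> is_gDrazin_inv (b * d) (b * e ^+ 2 * d).
Proof.
move=> H1 H2 [e He].
have H1' : b * d * b = b * (a * c) by rewrite mulrA.
have K e0 := @main R (a * c) b d e0 H1' H2.
split; last exact: K.
by exists (b * e ^+ 2 * d); apply: K.
Qed.
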